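(* Let $m\ge2$ and $K^*>m$ be integers, set $L=K^*-m+1$, and let $\tau^s>1$. For $r\in[0,1]$ let $$f(r)=\frac{K^*!}{L!\,(m-2)!}\,r^{L}(1-r)^{m-2},$$ for $x\ge0$ and integers $l\ge1$ let $G_l(x)=e^{-x}\sum_{n=0}^{l-1}\frac{x^n}{n!}$, and for $c\ge0$ define $$P_d^s(c)=\int_0^{1/\tau^s}f(r)\,dr+\int_{1/\tau^s}^{1}f(r)\Big[1-\frac{1}{(r\tau^s)^{L}}\sum_{l=1}^{L}\binom{L}{l}(r\tau^s-1)^{l}\,G_l\!\big(c/\tau^s\big)\Big]dr .$$ Then $P_d^s$ is a strictly increasing function of $c$ on $[0,\infty)$.
   Context: In the paper, $P_d^s(c)$ is the detection probability of the adaptive detector $z^T\big(\sum_{k^*=-K^*}^{-1}z(k^* )z(k^* )^T\big)^{-1}z\gtrless\tau^s-1$ built from $K^*$ secondary residual samples, $m$ is the residual dimension, and $c=c_i^p(k)=a_i^T(k-1)\Sigma_{z_i^p}^{-1}a_i(k-1)$ is the non-centrality parameter induced by the attack. *)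

(* Defs.v *)
From Stdlib Require Import Reals Factorial.
From Coquelicot Require Import Coquelicot.
Open Scope R_scope.

Definition fdens (m Ks : nat) (r : R) : R :=
  let L := (Ks - m + 1)%nat in
  INR (fact Ks) / (INR (fact L) * INR (fact (m - 2))) * r ^ L * (1 - r) ^ (m - 2).

Definition G (l : nat) (x : R) : R :=
  exp (- x) * sum_f_R0 (fun n => x ^ n / INR (fact n)) (l - 1).

Definition inner (m Ks : nat) (tau c r : R) : R :=
  let L := (Ks - m + 1)%nat in
  1 - / (r * tau) ^ L *
      sum_f 1 L (fun l => Binomial.C L l * (r * tau - 1) ^ l * G l (c / tau)).

Definition Pds (m Ks : nat) (tau c : R) : R :=
  RInt (fdens m Ks) 0 (/ tau)
  + RInt (fun r => fdens m Ks r * inner m Ks tau c r) (/ tau) 1.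

(* Main.v *)
Require Import Defs.
From Stdlib Require Import Reals Factorial.
From Coquelicot Require Import Coquelicot.
From Stdlib Require Import Lra Lia.
Open Scope R_scope.

Definition Sx (k : nat) (x : R) := sum_f_R0 (fun n => x ^ n / INR (fact n)) k.

Lemma Sx_derive (k : nat) (x : R) :
  is_derive (Sx k) x (Sx k x - x ^ k / INR (fact k)).
Proof.
  induction k as [|k IH].
  - replace (Sx 0 x - x ^ 0 / INR (fact 0)) with 0 by (unfold Sx; simpl; field).
    apply (is_derive_ext (fun _ => 1)).
    + intros t; unfold Sx; simpl; field.
    + auto_derive; auto.
  - assert (H2 : is_derive (fun t => t ^ (S k) / INR (fact (S k))) x
                  (INR (S k) * x ^ k / INR (fact (S k)))).
    { auto_derive; auto. change (match k with 0%nat => 1 | S _ => INR k + 1 end) with (INR (S k)). change (fact k + k * fact k)%nat with (fact (S k)). unfold Rdiv; ring. }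
    assert (H := is_derive_plus _ _ _ _ _ IH H2).
    apply (is_derive_ext _ _ _ _ (fun t => eq_refl) ) in H.
    replace (Sx (S k) x - x ^ S k / INR (fact (S k))) with
      (plus (Sx k x - x ^ k / INR (fact k)) (INR (S k) * x ^ k / INR (fact (S k)))).
    + exact H.
    + unfold plus. simpl AbelianMonoid.plus.
      assert (INR (fact k) <> 0) by apply INR_fact_neq_0.
      assert (INR (S k) <> 0) by (apply not_0_INR; lia).
      unfold Sx; rewrite tech5.
      replace (fact (S k)) with (S k * fact k)%nat by reflexivity.
      rewrite mult_INR.
      change (match k with 0%nat => 1 | S _ => INR k + 1 end) with (INR (S k)). change (fact k + k * fact k)%nat with (fact (S k)). replace (fact (S k)) with (S k * fact k)%nat by reflexivity. rewrite mult_INR. match goal with |- ?a = ?b => change (@eq R a b) end. field; auto.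
Qed.

Lemma G_strict (k : nat) (x1 x2 : R) :
  0 <= x1 -> x1 < x2 -> exp (- x2) * Sx k x2 < exp (- x1) * Sx k x1.
Proof.
  intros H0 H1.
  destruct (MVT_cor2 (fun x => exp (- x) * Sx k x)
             (fun x => - (exp (- x) * (x ^ k / INR (fact k)))) x1 x2 H1)
    as [c [Hc1 Hc2]].
  - intros c Hc. apply is_derive_Reals.
    assert (He : is_derive (fun x => exp (- x)) c (- exp (- c))).
    { auto_derive; auto. ring. }
    assert (H := is_derive_mult _ _ _ _ _ He (Sx_derive k c) Rmult_comm).
    replace (- (exp (- c) * (c ^ k / INR (fact k)))) with
      (plus (mult (- exp (- c)) (Sx k c)) (mult (exp (- c)) (Sx k c - c ^ k / INR (fact k)))).
    + exact H.
    + unfold plus, mult; simpl. ring.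
  - assert (0 < exp (- c) * (c ^ k / INR (fact k))).
    { apply Rmult_lt_0_compat. apply exp_pos.
      apply Rdiv_lt_0_compat. apply pow_lt; lra. apply INR_fact_lt_0. }
    nra.
Qed.

Lemma sum_strict (a b : nat -> R) (n : nat) :
  (forall i, (i <= n)%nat -> a i < b i) -> sum_f_R0 a n < sum_f_R0 b n.
Proof.
  induction n as [|n IH]; intros H; simpl.
  - apply H; lia.
  - apply Rplus_lt_compat. apply IH; intros; apply H; lia. apply H; lia.
Qed.

Lemma cconst (c x : R) : continuity_pt (fun _ => c) x.
Proof. apply continuity_pt_const. intros a b; reflexivity. Qed.
Lemma cid (x : R) : continuity_pt (fun r => r) x.
Proof. apply derivable_continuous_pt, derivable_pt_id. Qed.
Lemma cmult f g x : continuity_pt f x -> continuity_pt g x ->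
  continuity_pt (fun r => f r * g r) x.
Proof. intros; apply (continuity_pt_mult f g); auto. Qed.
Lemma cminus f g x : continuity_pt f x -> continuity_pt g x ->
  continuity_pt (fun r => f r - g r) x.
Proof. intros; apply (continuity_pt_minus f g); auto. Qed.
Lemma cdiv f g x : continuity_pt f x -> continuity_pt g x -> g x <> 0 ->
  continuity_pt (fun r => f r / g r) x.
Proof. intros; apply (continuity_pt_div f g); auto. Qed.
Lemma cinv f x : continuity_pt f x -> f x <> 0 ->
  continuity_pt (fun r => / f r) x.
Proof. intros; apply (continuity_pt_inv f); auto. Qed.
Lemma cpow f n x : continuity_pt f x -> continuity_pt (fun r => f r ^ n) x.
Proof.
  intros H; induction n as [|n IH]; simpl.
  - apply cconst.
  - apply cmult; auto.
Qed.
Lemma csum (F : R -> nat -> R) n x : (forall i, continuity_pt (fun r => F r i) x) ->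
  continuity_pt (fun r => sum_f_R0 (F r) n) x.
Proof.
  intros H; induction n as [|n IH]; simpl.
  - apply H.
    apply (continuity_pt_plus (fun r => sum_f_R0 (F r) n) (fun r => F r (S n))); auto.
Qed.

Lemma cont_h (m Ks : nat) (tau c x : R) : 0 < tau -> 0 < x ->
  continuous (fun r => fdens m Ks r * inner m Ks tau c r) x.
Proof.
  intros Ht Hx. apply continuity_pt_filterlim.
  cbv beta zeta delta [fdens inner sum_f].
  repeat first [ apply cconst | apply cid | apply cmult | apply cminus
               | apply cpow | apply cinv | apply csum; intro ].
  apply pow_nonzero. nra.
Qed.

Theorem proposition1 (m Ks : nat) (tau : R) :
  (2 <= m)%nat -> (m < Ks)%nat -> 1 < tau ->
  forall c1 c2 : R, 0 <= c1 -> c1 < c2 -> Pds m Ks tau c1 < Pds m Ks tau c2.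
Proof.
  intros Hm HK Ht c1 c2 Hc1 Hc2.
  assert (Hti : 0 < / tau) by (apply Rinv_0_lt_compat; lra).
  assert (Hti1 : / tau < 1).
  { rewrite <- Rinv_1. apply Rinv_lt_contravar; lra. }
  unfold Pds. apply Rplus_lt_compat_l.
  apply RInt_lt; [lra | intros; apply cont_h; lra .. |].
  intros r [Hr1 Hr2].
  assert (Hrt : 1 < r * tau).
  { apply (Rmult_lt_compat_r tau) in Hr1; [|lra].
    rewrite Rinv_l in Hr1; lra. }
  apply Rmult_lt_compat_l.
  - unfold fdens. apply Rmult_lt_0_compat; [apply Rmult_lt_0_compat|].
    + apply Rdiv_lt_0_compat. apply INR_fact_lt_0.
      apply Rmult_lt_0_compat; apply INR_fact_lt_0.
    + apply pow_lt; lra.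
    + apply pow_lt; lra.
  - unfold inner. cbv zeta.
    apply Rplus_lt_compat_l, Ropp_lt_contravar.
    apply Rmult_lt_compat_l.
    + apply Rinv_0_lt_compat, pow_lt; lra.
    + unfold sum_f. apply sum_strict. intros i Hi.
      apply Rmult_lt_compat_l.
      * apply Rmult_lt_0_compat.
        -- unfold Binomial.C. apply Rdiv_lt_0_compat. apply INR_fact_lt_0.
           apply Rmult_lt_0_compat; apply INR_fact_lt_0.
        -- apply pow_lt; lra.
      * unfold G. replace (i + 1 - 1)%nat with i by lia.
        apply (G_strict i).
        -- apply Rmult_le_pos; lra.
        -- apply Rmult_lt_compat_r; lra.
Qed.
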